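(* Let $X,Y\subseteq\Sigma^*$. If there exists $k\in\mathbb{N}$ such that for every $x\in X$ there exists $y\in Y$ with $\mathrm{ed}(x,y)<k$, and for every $y\in Y$ there exists $x\in X$ with $\mathrm{ed}(x,y)<k$, then $D(X,Y)=0$ for every $D\in\{\mathrm{AH}_{\mathrm{ned}},\mathrm{AH}_{\mathrm{ged}},\mathrm{AH}_{\mathrm{ced}}\}$.
   Context: $\Sigma$ is a finite alphabet. An edit path from $x$ to $y$ is a sequence $p=(a_1,b_1)\cdots(a_n,b_n)$ with $(a_i,b_i)\in(\Sigma\cup\{\varepsilon\})^2\setminus\{(\varepsilon,\varepsilon)\}$, $a_1\cdots a_n=x$, $b_1\cdots b_n=y$; $|p|=n$, $\mathrm{wgt}(p)=|\{i:a_i\ne b_i\}|$. $\mathrm{ed}(x,y)=\min_p\mathrm{wgt}(p)$ (Levenshtein distance); $\mathrm{ned}(x,y)=\min_p\mathrm{wgt}(p)/|p|$ ($\mathrm{ned}(\varepsilon,\varepsilon)=0$); $\mathrm{ged}(x,y)=\frac{2\mathrm{ed}(x,y)}{|x|+|y|+\mathrm{ed}(x,y)}$ ($0$ if $x=y=\varepsilon$); $\mathrm{ced}(x,y)$ is the minimum, over sequences $x=u_0,\dots,u_k=y$ with $\mathrm{ed}(u_{i-1},u_i)=1$, of $\sum_{i=1}^k1/\max(|u_{i-1}|,|u_i|)$. For a word distance $d$: $\overrightarrow{\mathrm{AH}}_{d}(X,Y)=\lim_{k\to\infty}\sup_{x\in X,|x|\ge k}\inf_{y\in Y}d(x,y)$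 (empty supremum $=0$) and $\mathrm{AH}_d(X,Y)=\max\{\overrightarrow{\mathrm{AH}}_{d}(X,Y),\overrightarrow{\mathrm{AH}}_{d}(Y,X)\}$. *)

(* Defs.v *)
From HB Require Import structures.
From mathcomp Require Import all_boot all_order all_algebra.
From mathcomp Require Import all_classical all_reals all_analysis.
Set Implicit Arguments. Unset Strict Implicit. Unset Printing Implicit Defensive.
Import Order.TTheory GRing.Theory Num.Theory.
Local Open Scope classical_set_scope.
Local Open Scope ring_scope.

Section EditDistances.
Variables (Sigma : finType) (R : realType).

Definition word := seq Sigma.

(* An edit operation (a,b) with a,b in Sigma \cup {eps}; None encodes eps. *)
Definition edit_op := (option Sigma * option Sigma)%type.

Definition opt_word (a : option Sigma) : word :=
  if a is Some c then [:: c] else [::].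

Definition is_edit_path (x y : word) (p : seq edit_op) : Prop :=
  all (fun ab => (ab.1 != None) || (ab.2 != None)) p /\
  flatten (map (fun ab => opt_word ab.1) p) = x /\
  flatten (map (fun ab => opt_word ab.2) p) = y.

Definition wgt (p : seq edit_op) : nat := count (fun ab => ab.1 != ab.2) p.

Definition ed (x y : word) : R :=
  inf [set (wgt p)%:R | p in is_edit_path x y].

Definition ned (x y : word) : R :=
  if (x == [::]) && (y == [::]) then 0
  else inf [set (wgt p)%:R / (size p)%:R | p in is_edit_path x y].

Definition ged (x y : word) : R :=
  if (x == [::]) && (y == [::]) then 0
  else 2 * ed x y / ((size x)%:R + (size y)%:R + ed x y).

(* x = u_0, u_1, ..., u_k = y with ed(u_{i-1},u_i) = 1; us = [u_1; ...; u_k] *)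
Definition ed_chain (x y : word) (us : seq word) : Prop :=
  last x us = y /\
  forall i, (i < size us)%N -> ed (nth x (x :: us) i) (nth x us i) = 1.

Definition chain_cost (x : word) (us : seq word) : R :=
  \sum_(i < size us)
    1 / (maxn (size (nth x (x :: us) i)) (size (nth x us i)))%:R.

Definition ced (x y : word) : R :=
  inf [set chain_cost x us | us in ed_chain x y].

Local Open Scope ereal_scope.

Definition AH_stage (d : word -> word -> R) (X Y : set word) (k : nat)
  : \bar R :=
  let S := [set ereal_inf [set (d x y)%:E | y in Y] | x in
             [set x | X x /\ (k <= size x)%N]] in
  if `[< S = set0 >] then 0 else ereal_sup S.

Definition AH_dir (d : word -> word -> R) (X Y : set word) : \bar R :=
  limn (AH_stage d X Y).

Definition AH (d : word -> word -> R) (X Y : set word) : \bar R :=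
  Order.max (AH_dir d X Y) (AH_dir d Y X).

End EditDistances.

(* Main.v *)
Require Import Defs.
From HB Require Import structures.
From mathcomp Require Import all_boot all_order all_algebra.
From mathcomp Require Import all_classical all_reals all_analysis.
From mathcomp Require Import zify ring lra.
Import Order.TTheory GRing.Theory Num.Theory.
Local Open Scope classical_set_scope.
Local Open Scope ring_scope.
Set Implicit Arguments. Unset Strict Implicit.

Section Comb.
Variable Sigma : finType.
Local Notation word := (seq Sigma).
Definition xp (p : seq (edit_op Sigma)) : word := flatten (map (fun ab => opt_word ab.1) p).
Definition yp (p : seq (edit_op Sigma)) : word := flatten (map (fun ab => opt_word ab.2) p).

Lemma size_opt (a : option Sigma) : (size (opt_word a) <= 1)%N.
Proof. by case: a. Qed.

Lemma size_xp p : (size (xp p) <= size p)%N.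
Proof.
elim: p => [|[a b] p IH] //=; rewrite /xp /= size_cat.
have := size_opt a; rewrite -/(xp p); lia.
Qed.

Lemma size_xp_yp p : (size (xp p) <= size (yp p) + wgt p)%N.
Proof.
elim: p => [|[a b] p IH] //=; rewrite /xp /yp /= !size_cat -/(xp p) -/(yp p) /wgt /= -/(wgt p).
case: a b => [a|] [b|] //=; try (case: (_ == _) => /=); lia.
Qed.

Definition single_edit (u v : word) := exists s t (a b : option Sigma),
  a <> b /\ u = s ++ opt_word a ++ t /\ v = s ++ opt_word b ++ t.

Fixpoint sechain (x : word) (us : seq word) : Prop :=
  if us is u :: us' then single_edit x u /\ sechain u us' else True.

Lemma sechain_cat x l1 l2 : sechain x l1 -> sechain (last x l1) l2 -> sechain x (l1 ++ l2).
Proof. by elim: l1 x => [|u l1 IH] x //= [h1 h2] h3; split => //; apply: IH. Qed.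

Lemma single_edit_pre c u v : single_edit u v -> single_edit (c ++ u) (c ++ v).
Proof.
move=> [s [t [a [b [ab [-> ->]]]]]]; exists (c ++ s), t, a, b; by rewrite !catA.
Qed.

Lemma sechain_pre c x us : sechain x us -> sechain (c ++ x) (map (cat c) us).
Proof. by elim: us x => [|u us IH] x //= [h1 h2]; split; [apply: single_edit_pre|apply: IH]. Qed.

Lemma chain_of_path p : exists us, [/\ sechain (xp p) us, last (xp p) us = yp p,
  size us = wgt p & all (fun u => size (xp p) <= size u + wgt p)%N us].
Proof.
elim: p => [|[a b] p [us [h1 h2 h3 h4]]]; first by exists [::].

have ex : xp ((a, b) :: p) = opt_word a ++ (xp p) by [].
have ey : yp ((a, b) :: p) = opt_word b ++ (yp p) by [].
have ew : wgt ((a, b) :: p) = ((a != b) + wgt p)%N by [].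
rewrite ex ey ew.
exists (map (cat (opt_word a)) us ++ (if a != b then [:: opt_word b ++ (yp p)] else [::])).
split.
- apply: sechain_cat; first exact: sechain_pre.
  rewrite last_map h2; case: eqP => //= ab; split => //.
  by exists [::], (yp p), a, b.
- by rewrite last_cat last_map h2; case: eqP => [->|_].
- rewrite size_cat size_map h3; case: (a != b) => /=; lia.
- rewrite all_cat; apply/andP; split.
  + apply/allP => u /mapP [w wus ->]; move/allP: h4 => /(_ w wus).
    rewrite !size_cat; case: (a != b) => /=; lia.
  + case: eqP => //= _; rewrite andbT.
    have := size_xp_yp ((a, b) :: p); rewrite ex ey ew /= !size_cat; lia.
Qed.


Variable R : realType.

Lemma xp_id (s : word) : xp (map (fun c => (Some c, Some c)) s) = s.
Proof. by elim: s => //= c s; rewrite /xp /= => ->. Qed.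
Lemma yp_id (s : word) : yp (map (fun c => (Some c, Some c)) s) = s.
Proof. by elim: s => //= c s; rewrite /yp /= => ->. Qed.
Lemma xp_cat p q : xp (p ++ q) = xp p ++ xp q.
Proof. by rewrite /xp map_cat flatten_cat. Qed.
Lemma yp_cat p q : yp (p ++ q) = yp p ++ yp q.
Proof. by rewrite /yp map_cat flatten_cat. Qed.

Lemma xp_del (s : word) : xp (map (fun c => (Some c, None)) s) = s.
Proof. by elim: s => //= c s; rewrite /xp /= => ->. Qed.
Lemma yp_del (s : word) : yp (map (fun c => (Some c, None)) s) = [::].
Proof. by elim: s => //= c s; rewrite /yp /= => ->. Qed.
Lemma xp_ins (s : word) : xp (map (fun c => (None, Some c)) s) = [::].
Proof. by elim: s => //= c s; rewrite /xp /= => ->. Qed.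
Lemma yp_ins (s : word) : yp (map (fun c => (None, Some c)) s) = s.
Proof. by elim: s => //= c s; rewrite /yp /= => ->. Qed.

Lemma xp_cons ab p : xp (ab :: p) = opt_word ab.1 ++ xp p. Proof. by []. Qed.
Lemma yp_cons ab p : yp (ab :: p) = opt_word ab.2 ++ yp p. Proof. by []. Qed.

Lemma wgt_id (s : word) : wgt (map (fun c => (Some c, Some c)) s) = 0%N.
Proof. by elim: s => //= c s; rewrite /wgt /= eqxx. Qed.

Lemma path_exists (x y : word) : exists p, is_edit_path x y p.
Proof.
exists (map (fun c => (Some c, None)) x ++ map (fun c => (None, Some c)) y).
split; first by rewrite all_cat; apply/andP; split; apply/allP => ? /mapP[? _ ->].
split.
- by rewrite -/(xp _) xp_cat xp_del xp_ins cats0.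
- by rewrite -/(yp _) yp_cat yp_del yp_ins.
Qed.


Lemma ed_ge0 (x y : word) : 0 <= ed R x y.
Proof.
apply: lb_le_inf; first by have [p hp] := path_exists x y; exists (wgt p)%:R, p.
by move=> _ [p _ <-].
Qed.

Lemma ed_le_path (x y : word) p : is_edit_path x y p -> ed R x y <= (wgt p)%:R.
Proof.
move=> hp; apply: ge_inf; last by exists p.
by exists 0 => _ [q _ <-].
Qed.

Lemma ed_lt (x y : word) (K : nat) : ed R x y < K%:R ->
  exists p, is_edit_path x y p /\ (wgt p < K)%N.
Proof.
move=> h; have [|_ [p hp <-]] := inf_lt _ h.
  by have [p hp] := path_exists x y; exists (wgt p)%:R, p.
by rewrite ltr_nat => hw; exists p.
Qed.

Definition swap_op (ab : edit_op Sigma) : edit_op Sigma := (ab.2, ab.1).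

Lemma swap_path (x y : word) p : is_edit_path x y p ->
  is_edit_path y x (map swap_op p) /\ wgt (map swap_op p) = wgt p.
Proof.
move=> [h1 [h2 h3]]; split; last first.
  by rewrite /wgt count_map; apply: eq_count => -[a b] /=; rewrite eq_sym.
split; first by rewrite all_map; apply: sub_all h1 => -[a b] /=; rewrite orbC.
by rewrite -!map_comp.
Qed.

Lemma all_id_eq p : wgt p = 0%N -> xp p = yp p.
Proof.
elim: p => [|[a b] p IH] //=; rewrite /wgt /=; case: eqP => //= -> /IH.
by rewrite /xp /yp /= => ->.
Qed.

Lemma single_edit_ed (u v : word) : single_edit u v -> ed R u v = 1.
Proof.
move=> [s [t [a [b [ab [eu ev]]]]]].
have uv : u != v.
  apply/eqP; rewrite eu ev => /eqP; rewrite eqseq_cat // eqxx /= => /eqP e.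
  have : size (opt_word a) = size (opt_word b).
    by move: (congr1 size e); rewrite !size_cat => /eqP; rewrite eqn_add2r => /eqP.
  move=> hs; move/eqP: e; rewrite eqseq_cat // => /andP[/eqP e _].
  by apply: ab; move: e; case: (a) (b) => [a0|] [b0|] //= [->].
set p := map (fun c => (Some c, Some c)) s ++ (a, b) :: map (fun c => (Some c, Some c)) t.
have hp : is_edit_path u v p.
  split.
    rewrite all_cat /= !andbA; apply/andP; split; last by apply/allP => ? /mapP[? _ ->].
    apply/andP; split; first by apply/allP => ? /mapP[? _ ->].
    by case: a b ab {eu ev uv p} => [a|] [b|].
  split; first by rewrite -/(xp _) xp_cat xp_cons !xp_id eu.
  by rewrite -/(yp _) yp_cat yp_cons !yp_id ev.
have wp : wgt p = 1%N.
  rewrite /wgt count_cat /= -/(wgt _) -/(wgt _) !wgt_id.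
  by case: eqP => //= _; rewrite addn0.
apply/eqP; rewrite eq_le; apply/andP; split.
  by have := ed_le_path hp; rewrite wp.
apply: lb_le_inf; first by exists (wgt p)%:R, p.
move=> _ [q [q1 [q2 q3]] <-]; rewrite ler1n lt0n; apply/negP => /eqP/all_id_eq.
by rewrite /xp /yp q2 q3 => e; move/eqP: uv.
Qed.


Lemma inf_ge0 (S : set R) : (forall r, S r -> 0 <= r) -> 0 <= inf S.
Proof.
move=> h; have [->|ne] := eqVneq S set0; first by rewrite inf0.
by apply: lb_le_inf; [exact/set0P | move=> r /h].
Qed.

Lemma natfrac_le (a b c d : nat) : (a * c <= b * d)%N -> (0 < c)%N -> (0 < d)%N ->
  a%:R / d%:R <= b%:R / c%:R :> R.
Proof.
move=> h c0 d0; rewrite ler_pdivrMr ?ltr0n // mulrAC ler_pdivlMr ?ltr0n //.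
by rewrite -!natrM ler_nat.
Qed.

Lemma sechain_ed x us : sechain x us ->
  forall i, (i < size us)%N -> ed R (nth x (x :: us) i) (nth x us i) = 1.
Proof.
elim: us x => [|u us IH] x //= [h1 h2] [|i] //=; first by move=> _; exact: single_edit_ed.
move=> hi; rewrite (set_nth_default u x) //; last by rewrite /= ltnS ltnW.
by rewrite (set_nth_default u x hi); apply: IH.
Qed.

Definition bnd (K n : nat) : R := (4 * K)%:R / n.+1%:R.

Lemma ned_bound (x y : word) p K : is_edit_path x y p -> (wgt p < K)%N ->
  (2 * K < size x)%N -> ned R x y <= bnd K (size x).
Proof.
move=> hp hw hK; rewrite /ned.
have -> : (x == [::]) = false by case: x hK {hp}.
apply: le_trans (_ : (wgt p)%:R / (size p)%:R <= _).
  by apply: ge_inf; [exists 0 => _ [q _ <-]; apply: divr_ge0 | exists p].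
have hs : (size x <= size p)%N by case: hp => _ [<- _]; apply: size_xp.
apply: natfrac_le => //; last lia.
nia.
Qed.

Lemma ged_bound (x y : word) p K : is_edit_path x y p -> (wgt p < K)%N ->
  (2 * K < size x)%N -> ged R x y <= bnd K (size x).
Proof.
move=> hp hw hK; rewrite /ged.
have -> : (x == [::]) = false by case: x hK {hp}.
have e0 := ed_ge0 x y; have ew := ed_le_path hp.
have n0 : 0 < (size x)%:R :> R by rewrite ltr0n; lia.
apply: le_trans (_ : 2 * ed R x y / (size x)%:R <= _).
  apply: ler_wpM2l; first by apply: mulr_ge0.
  rewrite lef_pV2 ?posrE //; last by apply: lt_le_trans n0 _; rewrite -addrA lerDl addr_ge0.
  by rewrite -addrA lerDl addr_ge0.
apply: le_trans (_ : (2 * wgt p)%:R / (size x)%:R <= _).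
  by apply: ler_wpM2r; [rewrite invr_ge0 ltW | rewrite natrM ler_wpM2l].
apply: natfrac_le => //; last lia.
nia.
Qed.

Lemma ced_bound (x y : word) p K : is_edit_path x y p -> (wgt p < K)%N ->
  (2 * K < size x)%N -> ced R x y <= bnd K (size x).
Proof.
case=> _ [ex ey] hw hK.
have [us [h1 h2 h3 h4]] := chain_of_path p.
rewrite -/(xp _) in ex; rewrite -/(yp _) in ey; rewrite ex ey in h1 h2 h4.
have hc : ed_chain R x y us by split => //; apply: sechain_ed.
have cge0 : forall vs, 0 <= chain_cost R x vs.
  by move=> vs; apply: sumr_ge0 => i _; apply: divr_ge0.
apply: le_trans (_ : chain_cost R x us <= _).
  by apply: ge_inf; [exists 0 => _ [q _ <-] | exists us].
set m := (size x - wgt p)%N.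
apply: le_trans (_ : \sum_(i < size us) (1%:R / m%:R) <= _).
  apply: ler_sum => i _; rewrite -[X in X / _ <= _]/(1%:R); apply: natfrac_le; [|lia|].
  - have : nth x us i \in us by apply: mem_nth.
    move/allP: h4 => h4 /h4 /= H; rewrite /m !mul1n.
    by apply: leq_trans (leq_maxr _ _); rewrite leq_subLR addnC.
  - have : nth x us i \in us by apply: mem_nth.
    move/allP: h4 => h4 /h4 /= H; apply: (leq_trans _ (leq_maxr _ _)).
    have hwx : (wgt p < size x)%N by lia.
    by rewrite -(ltn_add2r (wgt p)) add0n (leq_trans hwx H).
rewrite sumr_const card_ord h3 -(mulr_natr (1 / m%:R)) mul1r mulrC.
apply: natfrac_le; [|lia|rewrite /m; lia].
rewrite /m; nia.
Qed.


Lemma ned_ge0 (x y : word) : 0 <= ned R x y.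
Proof.
rewrite /ned; case: ifP => // _; apply: inf_ge0 => _ [p _ <-]; exact: divr_ge0.
Qed.

Lemma ged_ge0 (x y : word) : 0 <= ged R x y.
Proof.
have := ed_ge0 x y => e0.
rewrite /ged; case: ifP => // _; apply: divr_ge0; first by apply: mulr_ge0.
by rewrite !addr_ge0.
Qed.

Lemma ced_ge0 (x y : word) : 0 <= ced R x y.
Proof.
apply: inf_ge0 => _ [us _ <-]; apply: sumr_ge0 => i _; exact: divr_ge0.
Qed.

Lemma bnd_ge0 K n : 0 <= bnd K n.
Proof. exact: divr_ge0. Qed.

Lemma bnd_mono K n m : (n <= m)%N -> bnd K m <= bnd K n.
Proof. by move=> h; apply: natfrac_le => //; nia. Qed.

Lemma bnd_cvg K : (fun n => (bnd K n)%:E) @ \oo --> 0%E.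
Proof.
apply: cvg_EFin; first exact: nearW.
rewrite -(mulr0 (4 * K)%:R); apply: cvgMl_tmp.
exact: cvg_harmonic.
Qed.

Local Open Scope ereal_scope.

Lemma AH_dir0 (d : word -> word -> R) (X Y : set word) K :
  (forall x y, (0 <= d x y)%R) ->
  (forall x, X x -> (2 * K < size x)%N -> exists y, Y y /\ (d x y <= bnd K (size x))%R) ->
  AH_dir d X Y = 0.
Proof.
move=> d0 hb; apply: cvg_lim => //.
apply: (@squeeze_cvge _ _ _ _ (fun=> 0) _ (fun n => (bnd K n)%:E)); last first.
- exact: bnd_cvg.
- exact: cvg_cst.
exists (2 * K).+1 => // n /= hn; rewrite /AH_stage.
set S := (X in `[< X = set0 >]).
have inf0 : forall x, 0 <= ereal_inf [set (d x y)%:E | y in Y].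
  by move=> x; apply: le_ereal_inf_tmp => _ [y _ <-]; rewrite lee_fin.
case: asboolP => [_|hS]; first by rewrite lexx lee_fin bnd_ge0.
apply/andP; split.
  have /set0P [z Sz] : S != set0 by apply/eqP.
  apply: le_ereal_sup_tmp; exists z => //; case: Sz => x _ <-; exact: inf0.
apply: ge_ereal_sup => _ [x [Xx hx] <-].
have [y [Yy hy]] := hb x Xx (leq_trans hn hx).
apply: ge_ereal_inf; exists (d x y)%:E; first by exists y.
rewrite lee_fin (le_trans hy) //; exact: bnd_mono.
Qed.

End Comb.

Theorem mainTheorem8 (Sigma : finType) (R : realType)
    (X Y : set (seq Sigma)) :
  (exists k : nat,
     (forall x, X x -> exists y, Y y /\ ed R x y < k%:R) /\
     (forall y, Y y -> exists x, X x /\ ed R x y < k%:R)) ->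
  AH (ned R) X Y = 0%E /\ AH (ged R) X Y = 0%E /\ AH (ced R) X Y = 0%E.
Proof.
move=> [K [h1 h2]].
have gen : forall d : seq Sigma -> seq Sigma -> R, (forall x y, 0 <= d x y)%R ->
  (forall x y p, is_edit_path x y p -> (wgt p < K)%N -> (2 * K < size x)%N ->
     (d x y <= bnd R K (size x))%R) -> AH d X Y = 0%E.
  move=> d d0 db; rewrite /AH (@AH_dir0 _ _ d X Y K) // ?(@AH_dir0 _ _ d Y X K) //.
  - by rewrite maxxx.
  - move=> y Yy hy; have [x [Xx e]] := h2 y Yy.
    have [p [hp hw]] := ed_lt e; have [hp' hw'] := swap_path hp.
    by exists x; split => //; apply: (db _ _ _ hp') => //; rewrite hw'.
  - move=> x Xx hx; have [y [Yy e]] := h1 x Xx.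
    have [p [hp hw]] := ed_lt e.
    by exists y; split => //; apply: (db _ _ _ hp).
split; [|split]; apply: gen.
- exact: ned_ge0.
- move=> x y p; exact: ned_bound.
- exact: ged_ge0.
- move=> x y p; exact: ged_bound.
- exact: ced_ge0.
- move=> x y p; exact: ced_bound.
Qed.
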